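(* Let $n\ge 1$ and let $\Pi_n=\{(u_1,\ldots,u_n)\in\mathbf{R}^n: u_i>0,\ u_i+u_{i+1}<\pi/2\ (1\le i\le n)\}$, with $u_{n+1}:=u_1$. The transformation $x_i=\frac{\sin u_i}{\cos u_{i+1}}$ ($1\le i\le n$, with $u_{n+1}:=u_1$) maps $\Pi_n$ bijectively onto the open unit cube $(0,1)^n$. *)

(* Defs.v *)
From HB Require Import structures.
From mathcomp Require Import all_boot all_order all_algebra.
From mathcomp Require Import all_classical all_reals all_analysis.
Set Implicit Arguments. Unset Strict Implicit. Unset Printing Implicit Defensive.
Import Order.TTheory GRing.Theory Num.Theory.
Local Open Scope classical_set_scope.
Local Open Scope ring_scope.

(* cyclic successor index: u_{n+1} := u_1 *)
Definition succ_idx (n : nat) (i : 'I_n) : 'I_n := ordS i.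

Definition Pi_set (R : realType) (n : nat) : set ('I_n -> R) :=
  [set u | forall i : 'I_n, 0 < u i /\ u i + u (succ_idx i) < pi / 2].

Definition open_cube (R : realType) (n : nat) : set ('I_n -> R) :=
  [set x | forall i : 'I_n, 0 < x i /\ x i < 1].

Definition transfo (R : realType) (n : nat) (u : 'I_n -> R) : 'I_n -> R :=
  fun i => sin (u i) / cos (u (succ_idx i)).

(* Main.v *)
Require Import Defs.
From mathcomp Require Import all_boot all_order all_algebra.
From mathcomp Require Import all_classical all_reals all_analysis.
From mathcomp Require Import ring lra.
Import Order.TTheory GRing.Theory Num.Theory.


Section Aux.
Local Open Scope ring_scope.
Variable R : realType.

Lemma has_max n (f : 'I_n -> R) (i0 : 'I_n) : exists j, forall i, f i <= f j.
Proof.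
case: (@arg_maxP _ _ _ i0 xpredT f erefl) => j _ H.
by exists j => i; apply: H.
Qed.

Lemma contract n (a f : 'I_n -> R) (c : R) (i0 : 'I_n) :
  (forall j, 0 <= a j < 1) ->
  (forall j, f j <= a j * f (succ_idx j) + (1 - a j) * c) -> forall j, f j <= c.
Proof.
move=> ha hf.
have [m hm] := @has_max n f i0.
suff H : f m <= c by move=> j; by apply: le_trans (hm j) _.
have := hf m; have := hm (succ_idx m); have /andP[h0 h1] := ha m.
move=> h2 h3; nra.
Qed.

Lemma uniq_sol n (a d : 'I_n -> R) (i0 : 'I_n) :
  (forall j, 0 <= a j < 1) ->
  (forall j, d j = - (a j * d (succ_idx j))) -> forall j, d j = 0.
Proof.
move=> ha hd j; apply/eqP; rewrite -normr_le0.
apply: (@contract n a (fun j => `|d j|) 0 i0 ha) => k.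
rewrite hd normrN normrM mulr0 addr0 ger0_norm //.
by case/andP: (ha k).
Qed.

Lemma bound_sol n (a s : 'I_n -> R) (i0 : 'I_n) :
  (forall j, 0 < a j < 1) ->
  (forall j, s j = a j * (1 - s (succ_idx j))) -> forall j, 0 < s j < 1.
Proof.
move=> ha hs.
have ha' : forall j, 0 <= a j < 1.
  by move=> j; case/andP: (ha j) => h1 h2; rewrite h2 ltW.
have H : forall j, `|s j - 2^-1| <= 2^-1.
  apply: (@contract n a (fun j => `|s j - 2^-1|) (2^-1) i0 ha') => k /=.
  have -> : s k - 2^-1 = a k * (- (s (succ_idx k) - 2^-1)) + (- ((1 - a k) * 2^-1)).
    by rewrite hs; field.
  apply: le_trans (ler_normD _ _) _.
  case/andP: (ha k) => h1 h2.
  rewrite normrM normrN normrN (gtr0_norm h1) [X in _ + X <= _]ger0_norm //.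
  apply: divr_ge0; lra.
have H01 : forall j, 0 <= s j <= 1.
  move=> j; have := H j; rewrite ler_norml => /andP[h1 h2]; apply/andP; split; lra.
move=> j; rewrite hs.
have /andP[h1 h2] := ha j.
have /andP[h3 h4] := H01 (succ_idx j).
have h5 : s (succ_idx j) < 1.
  rewrite hs; have /andP[h6 h7] := ha (succ_idx j).
  have /andP[h8 h9] := H01 (succ_idx (succ_idx j)).
  nra.
apply/andP; split; nra.
Qed.

End Aux.

Section Aux2.
Local Open Scope ring_scope.
Variable R : realType.

Lemma exists_sol n (a : 'I_n -> R) (i0 : 'I_n) :
  (forall j, 0 <= a j < 1) ->
  exists s : 'I_n -> R, forall j, s j = a j * (1 - s (succ_idx j)).
Proof.
move=> ha.
pose P : 'M[R]_n := \matrix_(k, j) (if k == succ_idx j then a j else 0).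
pose A : 'M[R]_n := 1%:M + P.
have HA : forall (v : 'rV[R]_n) j, (v *m A) 0 j = v 0 j + a j * v 0 (succ_idx j).
  move=> v j; rewrite mulmxDr mulmx1 !mxE; congr (_ + _).
  rewrite (bigD1 (succ_idx j)) //= mxE eqxx big1 ?addr0; first by rewrite mulrC.
  by move=> k /negbTE hk; rewrite mxE hk mulr0.
have detA : \det A != 0.
  apply/negP => /det0P [v vn0 vA].
  move/negP: vn0; apply; apply/eqP/matrixP => i j; rewrite (ord1 i) mxE.
  apply: (@uniq_sol R n a (fun j => v 0 j) i0 ha) => k /=.
  have := HA v k; rewrite vA mxE => /esym/eqP; rewrite addr_eq0 => /eqP.
  by [].
have uA : A \in unitmx by rewrite unitmxE unitfE.
pose r : 'rV[R]_n := \row_j a j.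
pose v := r *m invmx A.
exists (fun j => v 0 j) => j.
have := HA v j; rewrite /v mulmxKV // mxE => h.
rewrite mulrBr mulr1; lra.
Qed.

Lemma pihalf_gt0 : 0 < pi / 2 :> R.
Proof. by apply: divr_gt0; [exact: pi_gt0|]. Qed.

Lemma sin_pihalfB v : sin (pi / 2 - v) = cos v :> R.
Proof. by rewrite sinB sin_pihalf cos_pihalf mul1r mul0r subr0. Qed.

Lemma into_lemma (u v : R) : 0 < u -> 0 < v -> u + v < pi / 2 ->
  0 < sin u / cos v < 1.
Proof.
move=> hu hv huv; have hp := pihalf_gt0.
have su : 0 < sin u by apply: sin_gt0_pihalf; apply/andP; split; lra.
have cv : 0 < cos v by apply: cos_gt0_pihalf; apply/andP; split; lra.
have lt : sin u < cos v.
  rewrite -sin_pihalfB ltr_sin ?in_itv /=; try (apply/andP; split); lra.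
apply/andP; split; first exact: divr_gt0.
by rewrite ltr_pdivrMr // mul1r.
Qed.

Lemma back_lemma (u v : R) : 0 < u < pi / 2 -> 0 < v < pi / 2 ->
  sin u < cos v -> u + v < pi / 2.
Proof.
move=> /andP[h1 h2] /andP[h3 h4]; rewrite -sin_pihalfB ltr_sin; first lra.
  by rewrite in_itv /=; apply/andP; split; lra.
by rewrite in_itv /=; apply/andP; split; lra.
Qed.

End Aux2.

Section Aux3.
Local Open Scope ring_scope.
Variable R : realType.

Lemma Pi_bounds {n} {u : 'I_n -> R} j : @Pi_set R n u -> 0 < u j < pi / 2.
Proof.
move=> hu; have [h1 h2] := hu j; have [h3 _] := hu (succ_idx j).
apply/andP; split; lra.
Qed.

Lemma sq_rel {n} {u : 'I_n -> R} j : @Pi_set R n u ->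
  sin (u j) ^+ 2 = (transfo u j) ^+ 2 * (1 - sin (u (succ_idx j)) ^+ 2).
Proof.
move=> hu; have /andP[h1 h2] := Pi_bounds j hu.
have /andP[h3 h4] := Pi_bounds (succ_idx j) hu.
have hc : 0 < cos (u (succ_idx j)).
  by apply: cos_gt0_pihalf; apply/andP; split; lra.
by rewrite -cos2sin2 -exprMn /transfo divfK // gt_eqF.
Qed.

Lemma x_bounds {n} {u : 'I_n -> R} j : @Pi_set R n u -> 0 < transfo u j < 1.
Proof.
move=> hu; have [h1 h2] := hu j; have [h3 _] := hu (succ_idx j).
exact: into_lemma.
Qed.

End Aux3.

Local Open Scope ring_scope.

Theorem lemma2 (R : realType) (n : nat) (hn : (1 <= n)%N) :
  set_bij (@Pi_set R n) (@open_cube R n) (@transfo R n).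
Proof.
have i0 : 'I_n := Ordinal hn.
have hp := pihalf_gt0 R.
split.
- move=> u hu; rewrite /open_cube /= => i.
  by have /andP[] := x_bounds _ i hu.
- move=> u w; rewrite !inE => hu hw heq.
  pose a j := (transfo u j) ^+ 2.
  have ha : forall j, (0 <= a j < 1)%R.
    move=> j; have /andP[h1 h2] := x_bounds _ j hu; rewrite /a.
    apply/andP; split; [exact: sqr_ge0 | nra].
  have hd := @uniq_sol R n a (fun j => sin (u j) ^+ 2 - sin (w j) ^+ 2)%R i0 ha.
  have e : forall j, sin (u j) ^+ 2 - sin (w j) ^+ 2 = 0.
    apply: hd => k.
    rewrite (sq_rel _ k hu) (sq_rel _ k hw) -heq /a; ring.
  apply/funext => j.
  have /andP[u1 u2] := Pi_bounds _ j hu.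
  have /andP[w1 w2] := Pi_bounds _ j hw.
  have su : 0 < sin (u j) by apply: sin_gt0_pihalf; apply/andP; split.
  have sw : 0 < sin (w j) by apply: sin_gt0_pihalf; apply/andP; split.
  have /eqP := e j; rewrite subr_eq0 eqrXn2 ?ltW // => /eqP hs.
  apply: sin_inj => //; rewrite in_itv /=; apply/andP; split; lra.
- move=> x hx.
  pose a j := x j ^+ 2.
  have ha : forall j, 0 < a j < 1.
    move=> j; have [h1 h2] := hx j; rewrite /a.
    apply/andP; split; [exact: exprn_gt0 | nra].
  have ha' : forall j, 0 <= a j < 1.
    by move=> j; have /andP[h1 h2] := ha j; rewrite ltW.
  have [s hs] := @exists_sol R n a i0 ha'.
  have hb := @bound_sol R n a s i0 ha hs.
  have hq : forall j, 0 < Num.sqrt (s j) < 1.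
    move=> j; have /andP[h1 h2] := hb j.
    by rewrite sqrtr_gt0 h1 /= -sqrtr1 ltr_sqrt.
  have hq' : forall j, 0 < Num.sqrt (1 - s j).
    by move=> j; have /andP[h1 h2] := hb j; rewrite sqrtr_gt0 subr_gt0.
  pose u j := asin (Num.sqrt (s j)).
  have hin : forall j, Num.sqrt (s j) \in `[-1, 1].
    move=> j; have /andP[h1 h2] := hq j.
    rewrite in_itv /=; apply/andP; split; lra.
  have hsin : forall j, sin (u j) = Num.sqrt (s j).
    by move=> j; rewrite /u asinK.
  have hcos : forall j, cos (u j) = Num.sqrt (1 - s j).
    move=> j; have /andP[h1 h2] := hq j; have /andP[h3 h4] := hb j.
    rewrite /u cos_asin ?sqr_sqrtr //; try (apply/andP; split); lra.
  have hu : forall j, 0 < u j < pi / 2.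
    move=> j; have /andP[h1 h2] := hq j.
    have hge := @asin_geNpi2 R (Num.sqrt (s j)).
    have hle := @asin_lepi2 R (Num.sqrt (s j)).
    apply/andP; split; last by apply: asin_ltpi2; apply/andP; split; lra.
    rewrite -(@ltr_sin R) ?in_itv /=.
    + by rewrite sin0 hsin.
    + apply/andP; split; lra.
    + apply/andP; split; [apply: hge|apply: hle]; apply/andP; split; lra.
  have hkey : forall j, Num.sqrt (s j) = x j * Num.sqrt (1 - s (succ_idx j)).
    move=> j; have [h1 h2] := hx j.
    rewrite {1}hs /a sqrtrM ?sqr_ge0 // sqrtr_sqr ger0_norm //; exact: ltW.
  exists u.
    move=> j; have /andP[h1 h2] := hu j; split => //.
    have /andP[h3 h4] := hu (succ_idx j).
    apply: back_lemma; try (apply/andP; split => //).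
    rewrite hsin hcos hkey; have [h5 h6] := hx j.
    by rewrite gtr_pMl.
  apply/funext => j; rewrite /transfo hsin hcos hkey mulfK //.
  by rewrite gt_eqF ?hq'.
Qed.
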